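(* Assume the setting of the context (in particular $\rho\ge0$, $r+\frac\rho2\ge1$, $p>1$, $c^2<c_1^2$). Then every $\Phi_c\in\mathcal{G}_c$ is a minimizer of $U\mapsto\mathcal{E}(U)+c\,\mathcal{M}(U)$ over $U=(u,w)\in X$ subject to the constraint $\mathcal{Q}(u)=2^{\frac{p+1}{p-1}}[m_1(c)]^{\frac{p+1}{p-1}}$.
   Context: $L$ and $B$ are Fourier multiplier operators on $\mathbb{R}$, $\widehat{Lu}=l\widehat u$, $\widehat{Bu}=b\widehat u$, with smooth real symbols of orders $\rho\ge0$ and $-r$, $r\ge0$, $r+\frac\rho2\ge1$; for all $k$, $\frac{d^k}{d\xi^k}l=O(|\xi|^{\rho-k})$, $\frac{d^k}{d\xi^k}b=O(|\xi|^{-r-k})$ as $|\xi|\to\infty$; and with best constants $c_i>0$, $c_1^2(1+\xi^2)^{\rho/2}\le l(\xi)\le c_2^2(1+\xi^2)^{\rho/2}$, $c_3^2(1+\xi^2)^{-r/2}\le b(\xi)\le c_4^2(1+\xi^2)^{-r/2}$. $L^{1/2}B^{-1/2}$, $B^{-1/2}$ have symbols $l^{1/2}b^{-1/2}$, $b^{-1/2}$. Let $s_0=\frac{r+\rho}2$, $X=H^{s_0}\times H^{s_0-\rho/2}$ (Sobolev spaces on $\mathbb{R}$), $p>1$. For $\psi\in H^{s_0}$: $\mathcal{I}_c(\psi)=\frac12\|L^{1/2}B^{-1/2}\psi\|_{L^2}^2-\frac{c^2}2\|B^{-1/2}\psi\|_{L^2}^2$, $\mathcal{Q}(\psi)=\int|\psi|^{p+1}dx$,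 and $m_1(c)=\inf\{\mathcal{I}_c(\psi):\psi\in H^{s_0},\mathcal{Q}(\psi)=1\}$. For $U=(u,w)\in X$: $\mathcal{E}(U)=\frac12\|B^{-1/2}w\|_{L^2}^2+\frac12\|L^{1/2}B^{-1/2}u\|_{L^2}^2-\frac1{p+1}\|u\|_{L^{p+1}}^{p+1}$ and $\mathcal{M}(U)=\int(B^{-1/2}u)(B^{-1/2}w)dx$. Let $G_c=\{[2m_1(c)]^{1/(p-1)}\psi:\ \psi\in H^{s_0},\ \mathcal{Q}(\psi)=1,\ \mathcal{I}_c(\psi)=m_1(c)\}$ (the traveling wave profiles of speed $c$ for $u_{tt}-Lu_{xx}=-B(|u|^{p-1}u)_{xx}$), and $\mathcal{G}_c=\{(\phi,-c\phi):\phi\in G_c\}\subset X$. *)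

(* Defs.v *)
From HB Require Import structures.
From mathcomp Require Import all_boot all_order all_algebra.
From mathcomp Require Import all_classical all_reals all_analysis.
Set Implicit Arguments. Unset Strict Implicit. Unset Printing Implicit Defensive.
Import Order.TTheory GRing.Theory Num.Theory.
Import numFieldNormedType.Exports.
Local Open Scope classical_set_scope.
Local Open Scope ring_scope.

Section Defs.
Variable R : realType.
Local Notation mu := (@lebesgue_measure R).

Definition Rint (f : R -> R) : R := Rintegral mu setT f.

Definition L2 (u : R -> R) : Prop :=
  measurable_fun setT u /\ mu.-integrable setT (fun x => (u x ^+ 2)%:E).

(* Fourier transform truncated to [-N,N]:  F_N(xi) = int_{-N}^{N} e^{-i x xi} u(x) dx,
   split into real and imaginary parts *)
Definition FTN_re (u : R -> R) (N : nat) (xi : R) : R :=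
  Rintegral mu `[- N%:R, N%:R] (fun x => u x * cos (x * xi)).
Definition FTN_im (u : R -> R) (N : nat) (xi : R) : R :=
  Rintegral mu `[- N%:R, N%:R] (fun x => - (u x * sin (x * xi))).

(* (a, b) = (Re uhat, Im uhat) is the Fourier–Plancherel transform of u in L^2:
   uhat = L^2-lim_{N -> oo} F_N *)
Definition is_FT (u : R -> R) (ab : (R -> R) * (R -> R)) : Prop :=
  L2 u /\ L2 ab.1 /\ L2 ab.2 /\
  (fun N : nat => (\int[mu]_xi
      (((FTN_re u N xi - ab.1 xi) ^+ 2 + (FTN_im u N xi - ab.2 xi) ^+ 2)%:E))%E)
    @ \oo --> 0%E.

(* a chosen version of the Fourier transform (unique a.e. when it exists) *)
Definition FTre (u : R -> R) : R -> R := (get (is_FT u)).1.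
Definition FTim (u : R -> R) : R -> R := (get (is_FT u)).2.

Definition FTsq (u : R -> R) (xi : R) : R := FTre u xi ^+ 2 + FTim u xi ^+ 2.

Definition H (s : R) (u : R -> R) : Prop :=
  (exists ab, is_FT u ab) /\
  mu.-integrable setT (fun xi => ((1 + xi ^+ 2) `^ s * FTsq u xi)%:E).

(* ||T u||_{L^2}^2 for the Fourier multiplier T with symbol m,
   via Plancherel: (1/2pi) int |m|^2 |uhat|^2 *)
Definition mult_norm2 (m : R -> R) (u : R -> R) : R :=
  (2 * pi)^-1 * Rint (fun xi => m xi ^+ 2 * FTsq u xi).

(* int (T1 u)(T2 w) dx for real multipliers, via Parseval:
   (1/2pi) int m1 m2 Re(uhat conj(what)) *)
Definition mult_pair (m1 m2 : R -> R) (u w : R -> R) : R :=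
  (2 * pi)^-1 * Rint (fun xi => m1 xi * m2 xi *
                        (FTre u xi * FTre w xi + FTim u xi * FTim w xi)).

(* symbols of L^{1/2} B^{-1/2} and B^{-1/2} *)
Definition symLB (l b : R -> R) (xi : R) : R := Num.sqrt (l xi) / Num.sqrt (b xi).
Definition symB (b : R -> R) (xi : R) : R := (Num.sqrt (b xi))^-1.

Definition Qf (p : R) (psi : R -> R) : R := Rint (fun x => `|psi x| `^ (p + 1)).

Definition Ic (l b : R -> R) (c : R) (psi : R -> R) : R :=
  2^-1 * mult_norm2 (symLB l b) psi - c ^+ 2 / 2 * mult_norm2 (symB b) psi.

Definition s0 (r rho : R) : R := (r + rho) / 2.

Definition m1 (l b : R -> R) (r rho p c : R) : R :=
  inf [set Ic l b c psi | psi in [set psi | H (s0 r rho) psi /\ Qf p psi = 1]].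

Definition inX (r rho : R) (U : (R -> R) * (R -> R)) : Prop :=
  H (s0 r rho) U.1 /\ H (s0 r rho - rho / 2) U.2.

Definition Ef (l b : R -> R) (p : R) (U : (R -> R) * (R -> R)) : R :=
  2^-1 * mult_norm2 (symB b) U.2 + 2^-1 * mult_norm2 (symLB l b) U.1
  - (p + 1)^-1 * Rint (fun x => `|U.1 x| `^ (p + 1)).

Definition Mf (b : R -> R) (U : (R -> R) * (R -> R)) : R :=
  mult_pair (symB b) (symB b) U.1 U.2.

Definition Gc (l b : R -> R) (r rho p c : R) : set (R -> R) :=
  [set phi | exists psi, [/\ H (s0 r rho) psi, Qf p psi = 1,
     Ic l b c psi = m1 l b r rho p c &
     phi = (fun x => (2 * m1 l b r rho p c) `^ (p - 1)^-1 * psi x)]].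

Definition calGc (l b : R -> R) (r rho p c : R) : set ((R -> R) * (R -> R)) :=
  [set Phi | exists2 phi, Gc l b r rho p c phi & Phi = (phi, fun x => - c * phi x)].

Definition symbol_of_order (f : R -> R) (ord : R) : Prop :=
  (forall (k : nat) (x : R), derivable (derive1n k f) x 1) /\
  (forall k : nat, exists C M : R, 0 < M /\
     forall xi, M <= `|xi| -> `|derive1n k f xi| <= C * `|xi| `^ (ord - k%:R)).

Definition best_lower (f w : R -> R) (cl : R) : Prop :=
  0 < cl /\ (forall xi, cl ^+ 2 * w xi <= f xi) /\
  (forall d, (forall xi, d * w xi <= f xi) -> d <= cl ^+ 2).
Definition best_upper (f w : R -> R) (ch : R) : Prop :=
  0 < ch /\ (forall xi, f xi <= ch ^+ 2 * w xi) /\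
  (forall d, (forall xi, f xi <= d * w xi) -> ch ^+ 2 <= d).

End Defs.

(* Main.v *)
Require Import Defs.
From HB Require Import structures.
From mathcomp Require Import all_boot all_order all_algebra.
From mathcomp Require Import all_classical all_reals all_analysis.
From mathcomp Require Import measurable_realfun.
From mathcomp Require Import ring lra.
Set Implicit Arguments. Unset Strict Implicit. Unset Printing Implicit Defensive.
Import Order.TTheory GRing.Theory Num.Theory.
Import numFieldNormedType.Exports.
Local Open Scope classical_set_scope.
Local Open Scope ring_scope.
Section Aux.
Context {R : realType}.
Local Notation mu := (@lebesgue_measure R).

Lemma L2_meas (u : R -> R) : L2 u -> measurable_fun setT u.
Proof. by case. Qed.

Lemma L2_itv_int (u : R -> R) (N : nat) : L2 u ->
  mu.-integrable `[- N%:R, N%:R] (EFin \o u).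
Proof.
move=> [mu_ iu].
have mD : measurable (`[- (N%:R : R), N%:R]%classic : set R) by [].
apply: (@le_integrable _ _ _ mu _ mD _ (fun x => (1 + u x ^+ 2)%:E)).
- apply/measurable_EFinP; exact: measurable_funS mu_.
- move=> x _ /=; rewrite lee_fin [X in _ <= X]ger0_norm ?addr_ge0 ?sqr_ge0//.
  rewrite -real_normK ?num_real//; have := normr_ge0 (u x).
  move: `|u x| => t t0; have := sqr_ge0 (t - 1); nra.
- rewrite (_ : (fun x => _) = (fun x => 1%:E) \+ (fun x => (u x ^+ 2)%:E)); last first.
    by apply/funext => x.
  apply: integrableD => //.
  + apply/integrableP; split => //; rewrite integral_cst//= normr1 mul1e.
    by rewrite lebesgue_measure_itv/= lte_fin; case: ifP => _; rewrite ?ltry.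
  + by apply: integrableS iu.
Qed.

Lemma cont_mul_cos (y : R) (h : R -> R) (hc : continuous h) :
  continuous (fun l : R => y * h l).
Proof.
move=> l; apply: (@continuousM R R (cst y) h l); first exact: cst_continuous.
exact: hc.
Qed.

Lemma FTN_gen_cont (u : R -> R) (N : nat) (trig : R -> R) :
  continuous trig -> (forall z, `|trig z| <= 1) -> L2 u ->
  continuous (fun xi => \int[mu]_(x in `[- N%:R, N%:R]) (u x * trig (x * xi))).
Proof.
move=> ct bt hu xi.
have mB : measurable (`[- (N%:R : R), N%:R]%classic : set R) by [].
have iu := L2_itv_int N hu.
have mu_ := L2_meas hu.
have := @continuity_under_integral R _ _ mu (fun l y => u y * trig (y * l))
  `[- N%:R, N%:R] mB (xi - 1) (xi + 1).
apply.
- move=> x _. apply: (@le_integrable _ _ _ mu _ mB _ _ _ _ (integrable_norm iu)).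
    apply/measurable_EFinP; apply: measurable_funM; first exact: measurable_funS mu_.
    apply: measurableT_comp; first exact: continuous_measurable_fun.
    by apply: measurable_funM => //; exact: measurable_cst.
  move=> y _ /=; rewrite lee_fin normr_id normrM.
  by rewrite -[X in _ <= X]mulr1 ler_wpM2l.
- apply: aeW => y _ l _.
  apply: (@continuousM R R (cst (u y)) (fun l => trig (y * l)) l); first exact: cst_continuous.
  apply: continuous_comp; last exact: ct.
  apply: (@continuousM R R (cst y) id l); first exact: cst_continuous.
  exact: cvg_id.
- exact: integrable_norm iu.
- move=> x _; apply: aeW => y _ /=.
  by rewrite normrM -[X in _ <= X]mulr1 ler_wpM2l.
- rewrite inE /= in_itv /=; apply/andP; split; lra.
Qed.

Lemma FTN_re_meas (u : R -> R) N : L2 u -> measurable_fun setT (FTN_re u N).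
Proof.
move=> hu; have h := @FTN_gen_cont u N cos (@continuous_cos R) (@cos_max R) hu.
exact: (continuous_measurable_fun h).
Qed.

Lemma FTN_im_meas (u : R -> R) N : L2 u -> measurable_fun setT (FTN_im u N).
Proof.
move=> hu.
have -> : FTN_im u N = (fun xi => - \int[mu]_(x in `[- N%:R, N%:R]) (u x * sin (x * xi))).
  apply/funext => xi; rewrite /FTN_im.
  rewrite (_ : (fun x => - (u x * sin (x * xi))) = (fun x => (-1) * (u x * sin (x * xi)))); last first.
    by apply/funext => x; rewrite mulN1r.
  rewrite RintegralZl ?mulN1r//.
  apply: (le_integrable _ _ _ (integrable_norm (L2_itv_int N hu))) => //.
    apply/measurable_EFinP; apply: measurable_funM; first exact: measurable_funS (L2_meas hu).
    apply: measurableT_comp; first exact: continuous_measurable_fun (@continuous_sin R).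
    by apply: measurable_funM => //; exact: measurable_cst.
  move=> y _ /=; rewrite lee_fin normr_id normrM.
  by rewrite -[X in _ <= X]mulr1 ler_wpM2l// sin_max.
apply: measurableT_comp => //; apply: continuous_measurable_fun.
exact: (@FTN_gen_cont u N sin (@continuous_sin R) (@sin_max R) hu).
Qed.

Lemma err_meas (u : R -> R) (ab : (R -> R) * (R -> R)) N : is_FT u ab ->
  measurable_fun setT (fun xi => (FTN_re u N xi - ab.1 xi) ^+ 2 + (FTN_im u N xi - ab.2 xi) ^+ 2).
Proof.
move=> [hu [[ma _] [[mb _] _]]].
apply: measurable_funD; apply: measurable_funX; apply: measurable_funB => //.
- exact: FTN_re_meas.
- exact: FTN_im_meas.
Qed.

Lemma FT_unique (u : R -> R) (ab ab' : (R -> R) * (R -> R)) :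
  is_FT u ab -> is_FT u ab' ->
  ae_eq mu setT ab.1 ab'.1 /\ ae_eq mu setT ab.2 ab'.2.
Proof.
move=> hab hab'.
have [hu [[ma _] [[mb _] cv]]] := hab.
have [_ [[ma' _] [[mb' _] cv']]] := hab'.
pose h xi := (ab.1 xi - ab'.1 xi) ^+ 2 + (ab.2 xi - ab'.2 xi) ^+ 2.
have mh : measurable_fun setT h.
  by apply: measurable_funD; apply: measurable_funX; apply: measurable_funB.
have h0 : forall xi, 0 <= h xi by move=> xi; rewrite addr_ge0 ?sqr_ge0.
have le_h : forall N, (\int[mu]_xi (h xi)%:E <=
   2%:E * \int[mu]_xi (((FTN_re u N xi - ab.1 xi) ^+ 2 + (FTN_im u N xi - ab.2 xi) ^+ 2)%:E)
 + 2%:E * \int[mu]_xi (((FTN_re u N xi - ab'.1 xi) ^+ 2 + (FTN_im u N xi - ab'.2 xi) ^+ 2)%:E))%E.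
  move=> N.
  have m1 := err_meas N hab; have m2 := err_meas N hab'.
  rewrite -ge0_integralZl_EFin//; last 2 first.
  - by move=> x _; rewrite lee_fin addr_ge0 ?sqr_ge0.
  - exact/measurable_EFinP.
  rewrite -ge0_integralZl_EFin//; last 2 first.
  - by move=> x _; rewrite lee_fin addr_ge0 ?sqr_ge0.
  - exact/measurable_EFinP.
  rewrite -ge0_integralD//; last 4 first.
  - by move=> x _; rewrite lee_fin mulr_ge0 ?addr_ge0 ?sqr_ge0.
  - by apply: measurable_funeM; exact/measurable_EFinP.
  - by move=> x _; rewrite lee_fin mulr_ge0 ?addr_ge0 ?sqr_ge0.
  - by apply: measurable_funeM; exact/measurable_EFinP.
  apply: ge0_le_integral => //.
  - by move=> x _; rewrite lee_fin.
  - exact/measurable_EFinP.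
  - apply: emeasurable_funD; apply: measurable_funeM; exact/measurable_EFinP.
  move=> x _; rewrite -EFinM -EFinM -EFinD lee_fin /h.
  set F := FTN_re u N x; set G := FTN_im u N x.
  move: (ab.1 x) (ab'.1 x) (ab.2 x) (ab'.2 x) => a1 a2 b1 b2.
  have := sqr_ge0 (2 * F - a1 - a2); have := sqr_ge0 (2 * G - b1 - b2).
  nra.
have S0 : ((fun N => 2%:E * \int[mu]_xi (((FTN_re u N xi - ab.1 xi) ^+ 2 + (FTN_im u N xi - ab.2 xi) ^+ 2)%:E)
 + 2%:E * \int[mu]_xi (((FTN_re u N xi - ab'.1 xi) ^+ 2 + (FTN_im u N xi - ab'.2 xi) ^+ 2)%:E)) @ \oo --> 0)%E.
  rewrite -[X in _ --> X]adde0.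
  apply: cvgeD => //.
    by rewrite -[X in _ --> X](mule0 2%:E); apply: cvgeZl.
  by rewrite -[X in _ --> X](mule0 2%:E); apply: cvgeZl.
have hle0 : (\int[mu]_xi (h xi)%:E <= 0)%E.
  rewrite -(cvg_lim _ S0)//; apply: lime_ge; first by apply/cvg_ex; exists 0%E.
  exact: nearW.
have hint0 : (\int[mu]_xi `|(h xi)%:E| = 0)%E.
  apply/eqP; rewrite eq_le; apply/andP; split; last exact: integral_ge0.
  rewrite (le_trans _ hle0)// le_eqVlt; apply/orP; left; apply/eqP.
  by apply: eq_integral => x _; rewrite gee0_abs// lee_fin.
have /(ae_eq_integral_abs mu measurableT) hae := hint0.
have mhE : measurable_fun setT (fun xi => (h xi)%:E) by exact/measurable_EFinP.
have {hae} := hae mhE.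
move=> hae; split.
- apply: filterS hae => x /(_ I) /= [] hx _.
  have : (ab.1 x - ab'.1 x) ^+ 2 = 0.
    apply/eqP; rewrite eq_le sqr_ge0 andbT -hx /h lerDl sqr_ge0//.
  by move/eqP; rewrite sqrf_eq0 subr_eq0 => /eqP.
- apply: filterS hae => x /(_ I) /= [] hx _.
  have : (ab.2 x - ab'.2 x) ^+ 2 = 0.
    apply/eqP; rewrite eq_le sqr_ge0 andbT -hx /h lerDr sqr_ge0//.
  by move/eqP; rewrite sqrf_eq0 subr_eq0 => /eqP.
Qed.

Lemma int_u_trig (u : R -> R) N (trig : R -> R) :
  continuous trig -> (forall z, `|trig z| <= 1) -> L2 u -> forall xi : R,
  mu.-integrable `[- N%:R, N%:R] (EFin \o (fun x => u x * trig (x * xi))).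
Proof.
move=> ct bt hu xi.
apply: (le_integrable _ _ _ (integrable_norm (L2_itv_int N hu))) => //.
  apply/measurable_EFinP; apply: measurable_funM; first exact: measurable_funS (L2_meas hu).
  apply: measurableT_comp; first exact: continuous_measurable_fun ct.
  by apply: measurable_funM => //; exact: measurable_cst.
move=> y _ /=; rewrite lee_fin normr_id normrM.
by rewrite -[X in _ <= X]mulr1 ler_wpM2l.
Qed.

Lemma L2_scale (f : R -> R) k : L2 f -> L2 (fun x => k * f x).
Proof.
move=> [mf iff]; split.
  by apply: measurable_funM => //; exact: measurable_cst.
rewrite (_ : (fun x => ((k * f x) ^+ 2)%:E) = (fun x => ((k ^+ 2)%:E * (f x ^+ 2)%:E)%E)).
  exact: integrableZl.
by apply/funext => x; rewrite exprMn EFinM.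
Qed.

Lemma FT_scale (u : R -> R) ab k : is_FT u ab ->
  is_FT (fun x => k * u x) ((fun xi => k * ab.1 xi), (fun xi => k * ab.2 xi)).
Proof.
move=> hab; have [hu [ha [hb cv]]] := hab.
split; first exact: L2_scale.
split; first exact: L2_scale.
split; first exact: L2_scale.
have eRe N xi : FTN_re (fun x => k * u x) N xi = k * FTN_re u N xi.
  rewrite /FTN_re -RintegralZl//; last exact: (int_u_trig N (@continuous_cos R) (@cos_max R) hu).
  by congr Rintegral; apply/funext => x; rewrite mulrA.
have eIm N xi : FTN_im (fun x => k * u x) N xi = k * FTN_im u N xi.
  rewrite /FTN_im -RintegralZl//; last first.
    apply: integrableN (int_u_trig N (@continuous_sin R) (@sin_max R) hu xi).
  by congr Rintegral; apply/funext => x /=; rewrite mulrN mulrA.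
have -> : (fun N => (\int[mu]_xi
   (((FTN_re (fun x => k * u x) N xi - ((fun xi => k * ab.1 xi), (fun xi => k * ab.2 xi)).1 xi) ^+ 2 +
     (FTN_im (fun x => k * u x) N xi - ((fun xi => k * ab.1 xi), (fun xi => k * ab.2 xi)).2 xi) ^+ 2)%:E))%E)
  = (fun N => (k ^+ 2)%:E * \int[mu]_xi (((FTN_re u N xi - ab.1 xi) ^+ 2 + (FTN_im u N xi - ab.2 xi) ^+ 2)%:E))%E.
  apply/funext => N.
  rewrite -(@ge0_integralZl_EFin _ _ _ mu setT measurableT
    (fun xi => ((FTN_re u N xi - ab.1 xi) ^+ 2 + (FTN_im u N xi - ab.2 xi) ^+ 2)%:E) _ _ (k ^+ 2) (sqr_ge0 k)); last 2 first.
  - by move=> x _; rewrite lee_fin addr_ge0 ?sqr_ge0.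
  - by apply/measurable_EFinP; exact: (err_meas N hab).
  apply: eq_integral => xi _ /=; rewrite eRe eIm -EFinM; congr EFin.
  by rewrite -!mulrBr !exprMn mulrDr.
by rewrite -[X in _ --> X](mule0 (k ^+ 2)%:E); apply: cvgeZl.
Qed.

Lemma FT_get (u : R -> R) : (exists ab, is_FT u ab) -> is_FT u (FTre u, FTim u).
Proof. by move=> /getPex; rewrite /FTre /FTim -surjective_pairing. Qed.

Lemma FTre_meas (u : R -> R) : (exists ab, is_FT u ab) -> measurable_fun setT (FTre u).
Proof. by move=> /FT_get [_ [[] ]]. Qed.

Lemma FTim_meas (u : R -> R) : (exists ab, is_FT u ab) -> measurable_fun setT (FTim u).
Proof. by move=> /FT_get [_ [_ [[]]]]. Qed.

Lemma FTsq_meas (u : R -> R) : (exists ab, is_FT u ab) -> measurable_fun setT (FTsq u).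
Proof.
move=> h; apply: measurable_funD; apply: measurable_funX.
exact: FTre_meas. exact: FTim_meas.
Qed.

Lemma FT_scale_ae (u : R -> R) k : (exists ab, is_FT u ab) ->
  ae_eq mu setT (FTre (fun x => k * u x)) (fun xi => k * FTre u xi) /\
  ae_eq mu setT (FTim (fun x => k * u x)) (fun xi => k * FTim u xi).
Proof.
move=> h; have hg := FT_get h.
have h1 := FT_scale k hg.
have h2 : is_FT (fun x => k * u x) (FTre (fun x => k * u x), FTim (fun x => k * u x)).
  by apply: FT_get; eexists; exact: h1.
exact: FT_unique h2 h1.
Qed.

Lemma FTsq_scale_ae (u : R -> R) k : (exists ab, is_FT u ab) ->
  ae_eq mu setT (FTsq (fun x => k * u x)) (fun xi => k ^+ 2 * FTsq u xi).
Proof.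
move=> h; have [h1 h2] := FT_scale_ae k h.
apply: filterS2 h1 h2 => x e1 e2 /= _.
by rewrite /FTsq e1// e2// !exprMn mulrDr.
Qed.

Lemma Rint_ae (f g : R -> R) : measurable_fun setT f -> measurable_fun setT g ->
  ae_eq mu setT f g -> Defs.Rint f = Defs.Rint g.
Proof.
move=> mf mg fg; rewrite /Defs.Rint /Rintegral; congr fine.
apply: ae_eq_integral => //; try exact/measurable_EFinP.
by apply: filterS fg => x /= e Tx; rewrite e.
Qed.

Lemma int_ae (f g : R -> R) : measurable_fun setT g ->
  ae_eq mu setT f g -> mu.-integrable setT (EFin \o f) -> mu.-integrable setT (EFin \o g).
Proof.
move=> mg fg /integrableP[mf fi]; apply/integrableP; split; first exact/measurable_EFinP.
rewrite (_ : (\int[mu]_x `|(EFin \o g) x| = \int[mu]_x `|(EFin \o f) x|)%E)//.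
apply: ae_eq_integral => //.
- by apply: measurableT_comp => //; exact/measurable_EFinP.
- by apply: measurableT_comp.
by apply: filterS fg => x /= e Tx; rewrite e.
Qed.

Lemma wt_meas (s : R) : measurable_fun setT (fun xi : R => (1 + xi ^+ 2) `^ s).
Proof.
apply: (measurableT_comp (measurable_powR s)).
by apply: measurable_funD => //; apply: measurable_funX.
Qed.

Lemma wt_ge1 (s xi : R) : 0 <= s -> 1 <= (1 + xi ^+ 2) `^ s.
Proof.
move=> s0; have h1 : 1 <= 1 + xi ^+ 2 by rewrite lerDl sqr_ge0.
by have := @ler_powR R (1 + xi ^+ 2) h1 0 s s0; rewrite powRr0.
Qed.

Lemma wt_mono (s s' xi : R) : s' <= s -> (1 + xi ^+ 2) `^ s' <= (1 + xi ^+ 2) `^ s.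
Proof.
move=> h; have h1 : 1 <= 1 + xi ^+ 2 by rewrite lerDl sqr_ge0.
exact: (@ler_powR R (1 + xi ^+ 2) h1 s' s h).
Qed.

Lemma FTsq_ge0 (u : R -> R) xi : 0 <= FTsq u xi.
Proof. by rewrite /FTsq addr_ge0 ?sqr_ge0. Qed.

Lemma H_FT (s : R) u : H s u -> exists ab, is_FT u ab.
Proof. by case. Qed.

Lemma H_mono (s s' : R) u : s' <= s -> H s u -> H s' u.
Proof.
move=> ss [hf hi]; split => //.
apply: (le_integrable _ _ _ hi) => //.
  by apply/measurable_EFinP; apply: measurable_funM; [exact: wt_meas| exact: FTsq_meas].
move=> x _; rewrite lee_fin !ger0_norm ?mulr_ge0 ?powR_ge0 ?FTsq_ge0//.
by rewrite ler_wpM2r ?FTsq_ge0// wt_mono.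
Qed.

Lemma H_scale (s : R) u k : H s u -> H s (fun x => k * u x).
Proof.
move=> [[ab hab] hi].
have hex : exists ab, is_FT u ab by exists ab.
split; first by eexists; exact: (FT_scale k hab).
have hex' : exists ab, is_FT (fun x => k * u x) ab by eexists; exact: (FT_scale k hab).
have := @int_ae (fun xi => k ^+ 2 * ((1 + xi ^+ 2) `^ s * FTsq u xi))
  (fun xi => (1 + xi ^+ 2) `^ s * FTsq (fun x => k * u x) xi).
apply.
- by apply: measurable_funM; [exact: wt_meas| exact: FTsq_meas].
- apply: filterS (FTsq_scale_ae k hex) => x /= e Tx.
  by rewrite e// mulrCA.
- rewrite (_ : EFin \o _ = (fun x => (k ^+ 2)%:E * ((1 + x ^+ 2) `^ s * FTsq u x)%:E)%E).
    exact: integrableZl.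
  by apply/funext => x.
Qed.

Lemma absACBD (A B C D : R) : `|A * C + B * D| <= A ^+ 2 + B ^+ 2 + (C ^+ 2 + D ^+ 2).
Proof.
rewrite ler_norml; apply/andP; split;
have := sqr_ge0 A; have := sqr_ge0 B; have := sqr_ge0 C; have := sqr_ge0 D.
  have := sqr_ge0 (A + C); have := sqr_ge0 (B + D); rewrite !sqrrD; lra.
have := sqr_ge0 (A - C); have := sqr_ge0 (B - D); rewrite !sqrrB; lra.
Qed.

Lemma int_add (f g : R -> R) :
  mu.-integrable setT (EFin \o f) -> mu.-integrable setT (EFin \o g) ->
  mu.-integrable setT (EFin \o (fun x => f x + g x)).
Proof.
move=> hf hg; have := integrableD measurableT hf hg.
by apply: eq_integrable => // x _ /=.
Qed.

Lemma int_le (f g : R -> R) : measurable_fun setT f -> (forall x, `|f x| <= g x) ->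
  mu.-integrable setT (EFin \o g) -> mu.-integrable setT (EFin \o f).
Proof.
move=> mf fg ig; apply: (le_integrable _ _ _ ig) => //; first exact/measurable_EFinP.
move=> x _ /=; rewrite lee_fin (le_trans (fg x))// ler_norm//.
Qed.

Lemma int_scale (g : R -> R) (k : R) :
  mu.-integrable setT (EFin \o g) -> mu.-integrable setT (EFin \o (fun x => k * g x)).
Proof.
move=> ig; rewrite (_ : EFin \o _ = (fun x => k%:E * (EFin \o g) x)%E).
  exact: integrableZl.
by apply/funext => x.
Qed.

Lemma symbol_cont (f : R -> R) (o : R) : symbol_of_order f o -> continuous f.
Proof.
move=> [hd _] x; have := hd 0%N x; rewrite derive1n0 => /derivable1_diffP.
exact: differentiable_continuous.
Qed.
End Aux.

Section Main.
Context {R : realType}.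
Local Notation mu := (@lebesgue_measure R).
Context (l b : R -> R) (rho r c c1 c2 c3 : R).
Context (hrho : 0 <= rho) (hl : continuous l) (hb : continuous b).
Context (hc1 : 0 < c1) (lo_l : forall xi, c1 ^+ 2 * (1 + xi ^+ 2) `^ (rho / 2) <= l xi).
Context (up_l : forall xi, l xi <= c2 ^+ 2 * (1 + xi ^+ 2) `^ (rho / 2)).
Context (hc3 : 0 < c3) (lo_b : forall xi, c3 ^+ 2 * (1 + xi ^+ 2) `^ (- r / 2) <= b xi).
Context (hcc : c ^+ 2 < c1 ^+ 2).

Lemma b_gt0 xi : 0 < b xi.
Proof. by apply: lt_le_trans (lo_b xi); rewrite mulr_gt0 ?exprn_gt0 ?powR_gt0// ltr_wpDr ?sqr_ge0. Qed.

Lemma l_gt0 xi : 0 < l xi.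
Proof. by apply: lt_le_trans (lo_l xi); rewrite mulr_gt0 ?exprn_gt0 ?powR_gt0// ltr_wpDr ?sqr_ge0. Qed.

Lemma cl_le xi : c ^+ 2 <= l xi.
Proof.
apply: le_trans (ltW hcc) _; apply: le_trans (lo_l xi).
by rewrite ler_peMr ?sqr_ge0// wt_ge1// divr_ge0.
Qed.

Lemma binv_meas : measurable_fun setT (fun xi => (b xi)^-1).
Proof.
apply: continuous_measurable_fun => x; apply: continuousV; last exact: hb.
by rewrite gt_eqF// b_gt0.
Qed.

Lemma lb_meas : measurable_fun setT (fun xi => l xi / b xi).
Proof. by apply: measurable_funM; [exact: continuous_measurable_fun| exact: binv_meas]. Qed.

Lemma binv_le xi : (b xi)^-1 <= c3 ^-2 * (1 + xi ^+ 2) `^ (r / 2).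
Proof.
have wp : 0 < (1 + xi ^+ 2) `^ (- r / 2) by rewrite powR_gt0// ltr_wpDr ?sqr_ge0.
have -> : c3 ^-2 * (1 + xi ^+ 2) `^ (r / 2) = (c3 ^+ 2 * (1 + xi ^+ 2) `^ (- r / 2))^-1.
  by rewrite mulNr powRN [RHS]invfM invrK.
rewrite lef_pV2 ?posrE ?b_gt0 ?mulr_gt0 ?exprn_gt0//.
Qed.

Lemma lb_le xi : l xi / b xi <= (c2 ^+ 2 / c3 ^+ 2) * (1 + xi ^+ 2) `^ (s0 r rho).
Proof.
have -> : (c2 ^+ 2 / c3 ^+ 2) * (1 + xi ^+ 2) `^ (s0 r rho) =
   (c2 ^+ 2 * (1 + xi ^+ 2) `^ (rho / 2)) * (c3 ^-2 * (1 + xi ^+ 2) `^ (r / 2)).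
  rewrite /s0 (_ : (r + rho) / 2 = rho / 2 + r / 2); last by lra.
  rewrite powRD; last by apply/implyP => _; rewrite gt_eqF// ltr_wpDr ?sqr_ge0.
  by rewrite mulrACA.
apply: ler_pM => //; first exact: ltW (l_gt0 xi).
  by rewrite invr_ge0 ltW ?b_gt0.
exact: binv_le.
Qed.


Lemma s0E : s0 r rho - rho / 2 = r / 2.
Proof. rewrite /s0; lra. Qed.

Lemma r2_le_s0 : r / 2 <= s0 r rho.
Proof. by rewrite /s0 ler_pM2r// lerDl. Qed.

Lemma H_int (s : R) (u : R -> R) : H s u ->
  mu.-integrable setT (EFin \o (fun xi => (1 + xi ^+ 2) `^ s * FTsq u xi)).
Proof. by case. Qed.

Lemma J1 (w : R -> R) : H (s0 r rho - rho / 2) w ->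
  mu.-integrable setT (EFin \o (fun xi => (b xi)^-1 * FTsq w xi)).
Proof.
rewrite s0E => hw.
apply: (int_le _ _ (int_scale (c3 ^-2) (H_int hw))).
  by apply: measurable_funM; [exact: binv_meas| exact: FTsq_meas (H_FT hw)].
move=> x; rewrite ger0_norm; last by rewrite mulr_ge0 ?FTsq_ge0// invr_ge0 ltW// b_gt0.
by rewrite mulrA ler_wpM2r ?FTsq_ge0// binv_le.
Qed.

Lemma J3 (u : R -> R) : H (s0 r rho) u ->
  mu.-integrable setT (EFin \o (fun xi => (b xi)^-1 * FTsq u xi)).
Proof.
move=> hu.
apply: (int_le _ _ (int_scale (c3 ^-2) (H_int hu))).
  by apply: measurable_funM; [exact: binv_meas| exact: FTsq_meas (H_FT hu)].
move=> x; rewrite ger0_norm; last by rewrite mulr_ge0 ?FTsq_ge0// invr_ge0 ltW// b_gt0.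
rewrite mulrA ler_wpM2r ?FTsq_ge0//; apply: (le_trans (binv_le x)).
by rewrite ler_wpM2l ?invr_ge0 ?sqr_ge0// wt_mono// r2_le_s0.
Qed.

Lemma J2 (u : R -> R) : H (s0 r rho) u ->
  mu.-integrable setT (EFin \o (fun xi => l xi / b xi * FTsq u xi)).
Proof.
move=> hu.
apply: (int_le _ _ (int_scale (c2 ^+ 2 / c3 ^+ 2) (H_int hu))).
  by apply: measurable_funM; [exact: lb_meas| exact: FTsq_meas (H_FT hu)].
move=> x; rewrite ger0_norm; last first.
  by rewrite mulr_ge0 ?FTsq_ge0// divr_ge0// ltW// ?b_gt0 ?l_gt0.
by rewrite mulrA ler_wpM2r ?FTsq_ge0// lb_le.
Qed.

Lemma J4 (u w : R -> R) : H (s0 r rho) u -> H (s0 r rho - rho / 2) w ->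
  mu.-integrable setT (EFin \o (fun xi => (b xi)^-1 *
     (FTre u xi * FTre w xi + FTim u xi * FTim w xi))).
Proof.
move=> hu hw.
have := int_add (J3 hu) (J1 hw).
move=> ig; apply: (int_le _ _ ig).
  have m1 : measurable_fun setT (fun xi => FTre u xi * FTre w xi).
    exact: (measurable_funM (FTre_meas (H_FT hu)) (FTre_meas (H_FT hw))).
  have m2 : measurable_fun setT (fun xi => FTim u xi * FTim w xi).
    exact: (measurable_funM (FTim_meas (H_FT hu)) (FTim_meas (H_FT hw))).
  exact: (measurable_funM binv_meas (measurable_funD m1 m2)).
have bi0 : forall x, 0 <= (b x)^-1 by move=> x; rewrite invr_ge0 ltW// b_gt0.
move=> x; rewrite normrM (ger0_norm (bi0 x)) -mulrDr.
rewrite ler_wpM2l// /FTsq.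
exact: absACBD.
Qed.

Lemma symB_sq xi : symB b xi ^+ 2 = (b xi)^-1.
Proof. by rewrite /symB exprVn sqr_sqrtr// ltW// b_gt0. Qed.

Lemma symB_mul xi : symB b xi * symB b xi = (b xi)^-1.
Proof. by rewrite -expr2 symB_sq. Qed.

Lemma symLB_sq xi : symLB l b xi ^+ 2 = l xi / b xi.
Proof. by rewrite /symLB expr_div_n !sqr_sqrtr// ltW// ?b_gt0 ?l_gt0. Qed.

Lemma Ic_E (u : R -> R) : H (s0 r rho) u ->
  Ic l b c u = (2 * pi)^-1 / 2 * Defs.Rint (fun xi => (l xi - c ^+ 2) / b xi * FTsq u xi).
Proof.
move=> hu; rewrite /Ic /mult_norm2.
have -> : (fun xi => symLB l b xi ^+ 2 * FTsq u xi) = (fun xi => l xi / b xi * FTsq u xi).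
  by apply/funext => xi; rewrite symLB_sq.
have -> : (fun xi => symB b xi ^+ 2 * FTsq u xi) = (fun xi => (b xi)^-1 * FTsq u xi).
  by apply/funext => xi; rewrite symB_sq.
have -> : (fun xi => (l xi - c ^+ 2) / b xi * FTsq u xi) =
   (fun xi => l xi / b xi * FTsq u xi - c ^+ 2 * ((b xi)^-1 * FTsq u xi)).
  by apply/funext => xi; rewrite mulrBl mulrBl mulrA.
rewrite /Defs.Rint RintegralB//; last first.
  by apply: int_scale; exact: J3.
  exact: J2.
rewrite RintegralZl//; last exact: J3.
rewrite /Defs.Rint; ring.
Qed.

Lemma Ic_ge0 (u : R -> R) : H (s0 r rho) u -> 0 <= Ic l b c u.
Proof.
move=> hu; rewrite Ic_E// mulr_ge0//.
  by rewrite divr_ge0// invr_ge0 mulr_ge0// pi_ge0.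
apply: Rintegral_ge0 => x _; rewrite mulr_ge0 ?FTsq_ge0// divr_ge0 ?subr_ge0 ?cl_le//.
exact: ltW (b_gt0 x).
Qed.

Lemma lin_id (a X1 X2 X3 X4 Q q Y : R) : Y = X1 + 2 * c * X3 + c ^+ 2 * X4 ->
  2^-1 * (a * X1) + 2^-1 * (a * X2) - q * Q + c * (a * X3) =
  2^-1 * (a * X2) - c ^+ 2 / 2 * (a * X4) - q * Q + a / 2 * Y.
Proof. by move=> ->; field. Qed.

Lemma mnB (f : R -> R) : mult_norm2 (symB b) f =
  (2 * pi)^-1 * Defs.Rint (fun xi => (b xi)^-1 * FTsq f xi).
Proof.
rewrite /mult_norm2; congr (_ * Defs.Rint _); apply/funext => xi.
by rewrite symB_sq.
Qed.

Lemma mnLB (f : R -> R) : mult_norm2 (symLB l b) f =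
  (2 * pi)^-1 * Defs.Rint (fun xi => l xi / b xi * FTsq f xi).
Proof.
rewrite /mult_norm2; congr (_ * Defs.Rint _); apply/funext => xi.
by rewrite symLB_sq.
Qed.

Lemma mpB (f g : R -> R) : mult_pair (symB b) (symB b) f g =
  (2 * pi)^-1 * Defs.Rint (fun xi => (b xi)^-1 * (FTre f xi * FTre g xi + FTim f xi * FTim g xi)).
Proof.
rewrite /mult_pair; congr (_ * Defs.Rint _); apply/funext => xi.
by rewrite symB_mul.
Qed.

Local Opaque FTre FTim.
Lemma EM_E (p : R) (u w : R -> R) : H (s0 r rho) u -> H (s0 r rho - rho / 2) w ->
  Ef l b p (u, w) + c * Mf b (u, w) = Ic l b c u - (p + 1)^-1 * Qf p u +
  (2 * pi)^-1 / 2 * Defs.Rint (fun xi => (b xi)^-1 *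
     ((FTre w xi + c * FTre u xi) ^+ 2 + (FTim w xi + c * FTim u xi) ^+ 2)).
Proof.
move=> hu hw.
have -> : Ef l b p (u, w) = 2^-1 * mult_norm2 (symB b) w + 2^-1 * mult_norm2 (symLB l b) u
  - (p + 1)^-1 * Defs.Rint (fun x => `|u x| `^ (p + 1)) by [].
have -> : Mf b (u, w) = mult_pair (symB b) (symB b) u w by [].
rewrite /Ic /Qf (mnB w) (mnB u) (mnLB u) (mpB u w).
have i1 := J1 hw; have i2 := J2 hu; have i3 := J3 hu; have i4 := J4 hu hw.
have E : Defs.Rint (fun xi => (b xi)^-1 *
     ((FTre w xi + c * FTre u xi) ^+ 2 + (FTim w xi + c * FTim u xi) ^+ 2)) =
  Defs.Rint (fun xi => (b xi)^-1 * FTsq w xi) +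
  (2 * c) * Defs.Rint (fun xi => (b xi)^-1 * (FTre u xi * FTre w xi + FTim u xi * FTim w xi)) +
  c ^+ 2 * Defs.Rint (fun xi => (b xi)^-1 * FTsq u xi).
  transitivity (Defs.Rint (fun xi => ((b xi)^-1 * FTsq w xi +
      (2 * c) * ((b xi)^-1 * (FTre u xi * FTre w xi + FTim u xi * FTim w xi))) +
      c ^+ 2 * ((b xi)^-1 * FTsq u xi))).
    congr Defs.Rint; apply/funext => xi; rewrite /FTsq.
    move: (FTre w xi) (FTre u xi) (FTim w xi) (FTim u xi) ((b xi)^-1) => A B C D e.
    ring.
  have e1 := RintegralD measurableT (int_add i1 (int_scale (2 * c) i4)) (int_scale (c ^+ 2) i3).
  have e2 := RintegralD measurableT i1 (int_scale (2 * c) i4).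
  have e3 := RintegralZl (2 * c) measurableT i4.
  have e4 := RintegralZl (c ^+ 2) measurableT i3.
  apply: (eq_trans e1); congr (_ + _); last exact: e4.
  apply: (eq_trans e2); congr (_ + _); exact: e3.
exact: (lin_id _ _ _ _ E).
Qed.
Lemma H_low (f : R -> R) : H (s0 r rho) f -> H (s0 r rho - rho / 2) f.
Proof. by apply: H_mono; rewrite lerBlDr lerDl divr_ge0. Qed.

Lemma EM_lb (p : R) (u w : R -> R) : H (s0 r rho) u -> H (s0 r rho - rho / 2) w ->
  Ic l b c u - (p + 1)^-1 * Qf p u <= Ef l b p (u, w) + c * Mf b (u, w).
Proof.
move=> hu hw; rewrite (EM_E p hu hw) lerDl mulr_ge0//.
  by rewrite divr_ge0// invr_ge0 mulr_ge0// pi_ge0.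
apply: Rintegral_ge0 => x _; rewrite mulr_ge0 ?addr_ge0 ?sqr_ge0// invr_ge0.
exact: ltW (b_gt0 x).
Qed.

Lemma EM_Phi (p : R) (phi : R -> R) : H (s0 r rho) phi ->
  Ef l b p (phi, fun x => - c * phi x) + c * Mf b (phi, fun x => - c * phi x) =
  Ic l b c phi - (p + 1)^-1 * Qf p phi.
Proof.
move=> hphi; have hw := H_low (H_scale (- c) hphi).
rewrite (EM_E p hphi hw).
have hex := H_FT hphi.
have [e1 e2] := FT_scale_ae (- c) hex.
have hex' := H_FT hw.
have m1 : measurable_fun setT (fun xi => FTre (fun x => - c * phi x) xi + c * FTre phi xi).
  apply: (measurable_funD (FTre_meas hex')).
  exact: (measurable_funM (measurable_cst c) (FTre_meas hex)).
have m2 : measurable_fun setT (fun xi => FTim (fun x => - c * phi x) xi + c * FTim phi xi).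
  apply: (measurable_funD (FTim_meas hex')).
  exact: (measurable_funM (measurable_cst c) (FTim_meas hex)).
have m3 : measurable_fun setT (fun xi => (b xi)^-1 *
     ((FTre (fun x => - c * phi x) xi + c * FTre phi xi) ^+ 2 +
      (FTim (fun x => - c * phi x) xi + c * FTim phi xi) ^+ 2)).
  apply: (measurable_funM binv_meas).
  exact: (measurable_funD (measurable_funX 2 m1) (measurable_funX 2 m2)).
have -> : Defs.Rint (fun xi => (b xi)^-1 *
     ((FTre (fun x => - c * phi x) xi + c * FTre phi xi) ^+ 2 +
      (FTim (fun x => - c * phi x) xi + c * FTim phi xi) ^+ 2)) = Defs.Rint (fun _ => 0).
  apply: (Rint_ae m3 (measurable_cst (0:R))).
  apply: filterS2 e1 e2 => x /= h1 h2 _.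
  by rewrite h1// h2// !mulNr !addNr expr0n /= addr0 mulr0.
by rewrite /Defs.Rint Rintegral_cst// mul0r mulr0 addr0.
Qed.
Lemma Rint_scale_ge0 (f : R -> R) (k : R) : measurable_fun setT f ->
  (forall x, 0 <= f x) -> 0 <= k -> Defs.Rint (fun x => k * f x) = k * Defs.Rint f.
Proof.
move=> mf f0 k0; rewrite /Defs.Rint /Rintegral.
have := @ge0_integralZl_EFin _ _ _ mu setT measurableT (fun x => (f x)%:E) _ _ k k0.
have -> : (fun x => (k%:E * (f x)%:E)%E) = (fun x => (k * f x)%:E).
  by apply/funext => x; rewrite EFinM.
move=> ->; last 2 first.
- by move=> x _; rewrite lee_fin.
- exact/measurable_EFinP.
have : (0 <= \int[mu]_x (f x)%:E)%E by apply: integral_ge0 => x _; rewrite lee_fin.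
case: (\int[mu]_x (f x)%:E)%E => [y| |] //= _.
have [->|kp] := eqVneq k 0; first by rewrite mul0e /= mul0r.
have kp2 : 0 < k by rewrite lt_neqAle eq_sym kp.
by rewrite mulry gtr0_sg// mul1e /= mulr0.
Qed.

Lemma Rint_FTsq_scale (g : R -> R) (f : R -> R) (k : R) : measurable_fun setT g ->
  (exists ab, is_FT f ab) -> mu.-integrable setT (EFin \o (fun xi => g xi * FTsq f xi)) ->
  Defs.Rint (fun xi => g xi * FTsq (fun x => k * f x) xi) =
  k ^+ 2 * Defs.Rint (fun xi => g xi * FTsq f xi).
Proof.
move=> mg hex hi.
have hex' : exists ab, is_FT (fun x => k * f x) ab.
  by case: hex => ab hab; eexists; exact: (FT_scale k hab).
have m1 : measurable_fun setT (fun xi => g xi * FTsq (fun x => k * f x) xi).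
  exact: (measurable_funM mg (FTsq_meas hex')).
have m2 : measurable_fun setT (fun xi => k ^+ 2 * (g xi * FTsq f xi)).
  exact: (measurable_funM (measurable_cst (k ^+ 2)) (measurable_funM mg (FTsq_meas hex))).
have ae : ae_eq mu setT (fun xi => g xi * FTsq (fun x => k * f x) xi)
    (fun xi => k ^+ 2 * (g xi * FTsq f xi)).
  apply: filterS (FTsq_scale_ae k hex) => x /= e _.
  by rewrite e// mulrCA.
apply: (eq_trans (Rint_ae m1 m2 ae)).
exact: (RintegralZl (k ^+ 2) measurableT hi).
Qed.

Lemma lin2 (a X Y k : R) :
  2^-1 * (a * (k ^+ 2 * Y)) - c ^+ 2 / 2 * (a * (k ^+ 2 * X)) =
  k ^+ 2 * (2^-1 * (a * Y) - c ^+ 2 / 2 * (a * X)).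
Proof. by field. Qed.

Lemma Ic_scale (f : R -> R) (k : R) : H (s0 r rho) f ->
  Ic l b c (fun x => k * f x) = k ^+ 2 * Ic l b c f.
Proof.
move=> hf.
have e1 := Rint_FTsq_scale k binv_meas (H_FT hf) (J3 hf).
have e2 := Rint_FTsq_scale k lb_meas (H_FT hf) (J2 hf).
pose RLB := Defs.Rint (fun xi => l xi / b xi * FTsq f xi).
pose RB := Defs.Rint (fun xi => (b xi)^-1 * FTsq f xi).
apply: (@eq_trans _ _ (2^-1 * ((2 * pi)^-1 * (k ^+ 2 * RLB)) -
   c ^+ 2 / 2 * ((2 * pi)^-1 * (k ^+ 2 * RB)))).
  rewrite /Ic; congr (_ * _ - _ * _).
    by rewrite (mnLB (fun x => k * f x)); congr (_ * _); exact: e2.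
  by rewrite (mnB (fun x => k * f x)); congr (_ * _); exact: e1.
rewrite /Ic (mnLB f) (mnB f); exact: lin2.
Qed.

Lemma Qf_scale (p : R) (f : R -> R) (k : R) : -1 <= p -> measurable_fun setT f ->
  Qf p (fun x => k * f x) = `|k| `^ (p + 1) * Qf p f.
Proof.
move=> hp mf; rewrite /Qf.
have -> : (fun x => `|k * f x| `^ (p + 1)) = (fun x => `|k| `^ (p + 1) * `|f x| `^ (p + 1)).
  by apply/funext => x; rewrite normrM powRM.
apply: Rint_scale_ge0; last exact: powR_ge0; last by move=> x; exact: powR_ge0.
apply: (measurableT_comp (measurable_powR _)).
exact: (measurableT_comp (@normr_measurable _ _) mf).
Qed.
Lemma Kp_eq (m p : R) : 0 <= m ->
  ((2 * m) `^ (p - 1)^-1) `^ (p + 1) = 2 `^ ((p + 1) / (p - 1)) * m `^ ((p + 1) / (p - 1)).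
Proof. move=> m0; rewrite -powRrM (mulrC (p - 1)^-1) powRM//. Qed.

Lemma inv_pow (K x : R) : 0 < K -> (K^-1) `^ x * K `^ x = 1.
Proof.
move=> K0; rewrite -powR_inv1 ?ltW// -powRrM mulN1r powRN mulVf//.
by rewrite gt_eqF// powR_gt0.
Qed.

Lemma main_sec (p : R) (hp : 1 < p) Phi : calGc l b r rho p c Phi ->
    [/\ inX r rho Phi,
        Qf p Phi.1 = 2 `^ ((p + 1) / (p - 1)) * m1 l b r rho p c `^ ((p + 1) / (p - 1)) &
        forall U, inX r rho U ->
          Qf p U.1 = 2 `^ ((p + 1) / (p - 1)) * m1 l b r rho p c `^ ((p + 1) / (p - 1)) ->
          Ef l b p Phi + c * Mf b Phi <= Ef l b p U + c * Mf b U].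
Proof.
case=> phi [psi [hpsi Qpsi Icpsi ephi]] ->.
set m := m1 l b r rho p c in Icpsi *.
have m0 : 0 <= m by rewrite -Icpsi; exact: Ic_ge0.
set K := (2 * m) `^ (p - 1)^-1 in ephi.
have K0 : 0 <= K by exact: powR_ge0.
have hphi : H (s0 r rho) phi by rewrite ephi; exact: H_scale.
have mpsi : measurable_fun setT psi by case: (H_FT hpsi) => ab [[]].
have QP : Qf p phi = 2 `^ ((p + 1) / (p - 1)) * m `^ ((p + 1) / (p - 1)).
  rewrite ephi Qf_scale//; last by rewrite (le_trans _ (ltW hp))// lerN10.
  by rewrite Qpsi mulr1 ger0_norm// Kp_eq.
split; [| exact: QP |].
  split; first exact: hphi.
  exact: (H_low (H_scale (- c) hphi)).
case=> u w [/= hu hw] /= Qu.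
rewrite (EM_Phi p hphi).
apply: le_trans (EM_lb p hu hw).
rewrite QP -Qu lerD2r.
suff : K ^+ 2 * m <= Ic l b c u.
  by rewrite ephi Ic_scale// Icpsi.
have [m00|mp] := eqVneq m 0.
  by rewrite m00 mulr0; exact: Ic_ge0.
have Kp : 0 < K.
  by rewrite powR_gt0// mulr_gt0// lt_neqAle eq_sym mp m0.
pose psi' := fun x => K^-1 * u x.
have hpsi' : H (s0 r rho) psi' by exact: H_scale.
have mu_ : measurable_fun setT u by case: (H_FT hu) => ab [[]].
have Qpsi' : Qf p psi' = 1.
  rewrite /psi' Qf_scale//; last by rewrite (le_trans _ (ltW hp))// lerN10.
  rewrite Qu -Kp_eq// -/K ger0_norm ?invr_ge0//.
  exact: inv_pow.
have : m <= Ic l b c psi'.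
  apply: (ge_inf _ _).
    exists 0 => y [g [hg _] <-]; exact: Ic_ge0.
  by exists psi'.
rewrite /psi' Ic_scale// => h.
have := ler_wpM2l (sqr_ge0 K) h.
by rewrite mulrA -exprMn mulfV ?gt_eqF// expr1n mul1r.
Qed.
End Main.

Theorem lemma4p2 (R : realType) (l b : R -> R) (rho r p c c1 c2 c3 c4 : R) :
  0 <= rho -> 0 <= r -> 1 <= r + rho / 2 -> 1 < p ->
  symbol_of_order l rho -> symbol_of_order b (- r) ->
  best_lower l (fun xi => (1 + xi ^+ 2) `^ (rho / 2)) c1 ->
  best_upper l (fun xi => (1 + xi ^+ 2) `^ (rho / 2)) c2 ->
  best_lower b (fun xi => (1 + xi ^+ 2) `^ (- r / 2)) c3 ->
  best_upper b (fun xi => (1 + xi ^+ 2) `^ (- r / 2)) c4 ->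
  c ^+ 2 < c1 ^+ 2 ->
  forall Phi, calGc l b r rho p c Phi ->
    [/\ inX r rho Phi,
        Qf p Phi.1 = 2 `^ ((p + 1) / (p - 1)) * m1 l b r rho p c `^ ((p + 1) / (p - 1)) &
        forall U, inX r rho U ->
          Qf p U.1 = 2 `^ ((p + 1) / (p - 1)) * m1 l b r rho p c `^ ((p + 1) / (p - 1)) ->
          Ef l b p Phi + c * Mf b Phi <= Ef l b p U + c * Mf b U].
Proof.
move=> hrho hr hrr hp hsl hsb [hc1 [lol _]] [_ [upl _]] [hc3 [lob _]] _ hcc Phi hPhi.
exact: (main_sec hrho (symbol_cont hsl) (symbol_cont hsb) hc1 lol upl hc3 lob hcc hp hPhi).
Qed.
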